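(* Let $(J,[\cdot,\cdot],\alpha)$ be a Hom-Jacobi-Jordan algebra, $(V,\rho,\beta)$ a representation of $J$ on $V$ with respect to $\beta$, and let $\theta,\theta'$ be $2$-cocycles of $J$ with coefficients in $V$ which are equivalent, i.e. $\theta'-\theta\in B^2_{\alpha,\beta}(J,V)$. Then the extensions $(J\oplus V,[\cdot,\cdot]_{\theta},\alpha+\beta)$ and $(J\oplus V,[\cdot,\cdot]_{\theta'},\alpha+\beta)$ are equivalent: there is an isomorphism of Hom-Jacobi-Jordan algebras $\Phi\colon(J\oplus V,[\cdot,\cdot]_{\theta},\alpha+\beta)\to(J\oplus V,[\cdot,\cdot]_{\theta'},\alpha+\beta)$ with $\Phi\circ i_0=i_0$ and $\pi_0\circ\Phi=\pi_0$.
   Context: A Hom-Jacobi-Jordan algebra is a triple $(J,[\cdot,\cdot],\alpha)$ with $J$ a vector space, $[\cdot,\cdot]$ symmetric bilinear and $\alpha$ linear, satisfying $[\alpha(x),[y,z]]+[\alpha(y),[z,x]]+[\alpha(z),[x,y]]=0$. An isomorphism of Hom-Jacobi-Jordan algebras is a bijective linear map $\phi$ with $\phi\circ\alpha=\alpha'\circ\phi$ and $\phi([x,y])=[\phi(x),\phi(y)]'$. A representation of $J$ on $V$ with respect to $\beta\in\mathrm{End}(V)$ is a linear $\rho\colon J\to\mathrm{End}(V)$ with $\rho(\alpha(x))\circ\beta=\beta\circ\rho(x)$ and $\rho([x,y])\circ\beta=-\rho(\alpha(x))\rho(y)-\rho(\alpha(y))\rho(x)$. $C^2_{\alpha,\beta}(J,V)$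 is the set of symmetric bilinear $g\colon J\times J\to V$ with $\beta(g(x,y))=g(\alpha(x),\alpha(y))$; a $2$-cocycle is $g\in C^2_{\alpha,\beta}(J,V)$ with $g(\alpha(x),[y,z])+g(\alpha(y),[x,z])+g(\alpha(z),[x,y])+\rho(\alpha(x))g(y,z)+\rho(\alpha(y))g(x,z)+\rho(\alpha(z))g(x,y)=0$ for all $x,y,z$. $B^2_{\alpha,\beta}(J,V)$ is the set of maps $d^1f(x,y)=f([x,y])-\rho(x)f(y)-\rho(y)f(x)$ with $f\colon J\to V$ linear and $f\circ\alpha=\beta\circ f$. For a $2$-cocycle $\theta$, $J\oplus V$ carries the bracket $[x+v,y+w]_\theta=[x,y]+\rho(x)w+\rho(y)v+\theta(x,y)$ and the map $(\alpha+\beta)(x+v)=\alpha(x)+\beta(v)$; $i_0(v)=v$ and $\pi_0(x+v)=x$. *)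

(* Defs.v *)
From HB Require Import structures.
From mathcomp Require Import all_boot all_order all_algebra.
Set Implicit Arguments. Unset Strict Implicit. Unset Printing Implicit Defensive.
Import GRing.Theory.
Local Open Scope ring_scope.

Section HomJJ.
Variable K : fieldType.

Definition lin (U W : lmodType K) (f : U -> W) : Prop :=
  forall (a : K) (x y : U), f (a *: x + y) = a *: f x + f y.

Definition bilin (U W : lmodType K) (g : U -> U -> W) : Prop :=
  (forall y, lin (fun x => g x y)) /\ (forall x, lin (g x)).

Definition symmetric_bilin (U W : lmodType K) (g : U -> U -> W) : Prop :=
  bilin g /\ forall x y, g x y = g y x.

Definition HomJJ (J : lmodType K) (br : J -> J -> J) (alpha : J -> J) : Prop :=
  [/\ symmetric_bilin br, lin alpha &
   forall x y z, br (alpha x) (br y z) + br (alpha y) (br z x)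
                 + br (alpha z) (br x y) = 0].

Definition HomJJ_iso (J J' : lmodType K) (br : J -> J -> J) (alpha : J -> J)
  (br' : J' -> J' -> J') (alpha' : J' -> J') (phi : J -> J') : Prop :=
  [/\ lin phi, bijective phi,
      (forall x, phi (alpha x) = alpha' (phi x)) &
      (forall x y, phi (br x y) = br' (phi x) (phi y))].

Definition is_rep (J V : lmodType K) (br : J -> J -> J) (alpha : J -> J)
  (rho : J -> V -> V) (beta : V -> V) : Prop :=
  [/\ lin beta, forall x, lin (rho x),
      (forall (a : K) x y v, rho (a *: x + y) v = a *: rho x v + rho y v),
      (forall x v, rho (alpha x) (beta v) = beta (rho x v)) &
      (forall x y v, rho (br x y) (beta v)
                     = - rho (alpha x) (rho y v) - rho (alpha y) (rho x v))].

Definition C2 (J V : lmodType K) (alpha : J -> J) (beta : V -> V)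
  (g : J -> J -> V) : Prop :=
  symmetric_bilin g /\ forall x y, beta (g x y) = g (alpha x) (alpha y).

Definition cocycle2 (J V : lmodType K) (br : J -> J -> J) (alpha : J -> J)
  (rho : J -> V -> V) (beta : V -> V) (g : J -> J -> V) : Prop :=
  C2 alpha beta g /\
  forall x y z,
    g (alpha x) (br y z) + g (alpha y) (br x z) + g (alpha z) (br x y)
    + rho (alpha x) (g y z) + rho (alpha y) (g x z) + rho (alpha z) (g x y) = 0.

Definition d1 (J V : lmodType K) (br : J -> J -> J) (rho : J -> V -> V)
  (f : J -> V) : J -> J -> V :=
  fun x y => f (br x y) - rho x (f y) - rho y (f x).

Definition coboundary2 (J V : lmodType K) (br : J -> J -> J) (alpha : J -> J)
  (rho : J -> V -> V) (beta : V -> V) (g : J -> J -> V) : Prop :=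
  exists f : J -> V, [/\ lin f, (forall x, f (alpha x) = beta (f x)) &
                      forall x y, g x y = d1 br rho f x y].

(* J ⊕ V modelled as the product lmodType J * V *)
Definition ext_br (J V : lmodType K) (br : J -> J -> J) (rho : J -> V -> V)
  (theta : J -> J -> V) (p q : J * V) : J * V :=
  (br p.1 q.1, rho p.1 q.2 + rho q.1 p.2 + theta p.1 q.1).

Definition ext_alpha (J V : lmodType K) (alpha : J -> J) (beta : V -> V)
  (p : J * V) : J * V := (alpha p.1, beta p.2).

Definition i0 (J V : lmodType K) (v : V) : J * V := (0, v).
Definition pi0 (J V : lmodType K) (p : J * V) : J := p.1.

End HomJJ.

(* Main.v *)
Require Import Defs.
From HB Require Import structures.
From mathcomp Require Import all_boot all_order all_algebra.
Import GRing.Theory.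
Local Open Scope ring_scope.

Theorem lemma4p3 (K : fieldType) (J V : lmodType K)
  (br : J -> J -> J) (alpha : J -> J) (rho : J -> V -> V) (beta : V -> V)
  (theta theta' : J -> J -> V) :
  HomJJ br alpha ->
  is_rep br alpha rho beta ->
  cocycle2 br alpha rho beta theta ->
  cocycle2 br alpha rho beta theta' ->
  coboundary2 br alpha rho beta (fun x y => theta' x y - theta x y) ->
  exists Phi : J * V -> J * V,
    [/\ HomJJ_iso (ext_br br rho theta) (ext_alpha alpha beta)
                  (ext_br br rho theta') (ext_alpha alpha beta) Phi,
        (forall v : V, Phi (i0 J v) = i0 J v) &
        (forall p : J * V, pi0 (Phi p) = pi0 p)].
Proof.
move=> _ [Lb Lr _ _ _] _ _ [f [Lf fa df]].
have add_lin : forall (U W : lmodType K) (g : U -> W), lin g -> forall x y, g (x + y) = g x + g y.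
  by move=> U W g Lg x y; rewrite -[x in LHS]scale1r Lg scale1r.
have f0 : f 0 = 0.
  have h := add_lin _ _ f Lf 0 0; rewrite addr0 in h.
  by rewrite -{1}[f 0]addr0 in h; move/addrI: h => <-.
exists (fun p => (p.1, p.2 + f p.1)); split.
- split.
  + move=> a [x v] [y w] /=; rewrite Lf.
    by congr (_, _) => //=; rewrite scalerDr addrACA.
  + exists (fun p => (p.1, p.2 - f p.1)) => [[x v]|[x v]] /=; by rewrite ?addrK ?subrK.
  + move=> [x v]; rewrite /ext_alpha /=; congr (_, _) => /=.
    by rewrite fa add_lin.
  + move=> [x v] [y w]; rewrite /ext_br /=; congr (_, _) => /=.
    rewrite (add_lin _ _ _ (Lr x)) (add_lin _ _ _ (Lr y)).
    have := df x y; rewrite /d1 => e.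
    have -> : theta' x y = theta x y + (f (br x y) - rho x (f y) - rho y (f x)).
      by rewrite -e addrC subrK.
    set A := rho x w; set B := rho x (f y); set C := rho y v; set D := rho y (f x).
    set T := theta x y; set F := f (br x y).
    rewrite (addrACA A B C D) -[F - B - D]addrA -opprD -[A + C + (B + D) + _]addrA.
    rewrite (addrCA (B + D) T) (addrCA (B + D) F) subrr addr0.
    by rewrite !addrA.
- by move=> v; rewrite /i0; congr (_, _) => /=; rewrite f0 addr0.
- by [].
Qed.
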